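(* Consider the system \[ \begin{aligned} \tfrac{d}{dt}\mathrm{LTR}_R &= k_{OFF}\,\mathrm{LTR}_I - k_{ON}\,\mathrm{LTR}_R,\\ \tfrac{d}{dt}\mathrm{LTR}_I &= -\Big[\tfrac{w_3w_4}{w_5}k_A(\mathrm{Tat}) + k_{OFF}\Big]\mathrm{LTR}_I + w_1k_I\,\mathrm{LTR}_A + k_{ON}\,\mathrm{LTR}_R,\\ \tfrac{d}{dt}\mathrm{LTR}_A &= \tfrac{w_3w_4}{w_5}k_A(\mathrm{Tat})\,\mathrm{LTR}_I - w_1k_I\,\mathrm{LTR}_A,\\ \tfrac{d}{dt}\mathrm{Tat} &= \alpha_{p_1}\mathrm{env}_I - \gamma_{p_1}\mathrm{Tat},\\ \tfrac{d}{dt}\mathrm{TAR} &= \alpha_{m_1,R}\mathrm{LTR}_R + \alpha_{m_1,I}\mathrm{LTR}_I + \alpha_{m_1,A}\mathrm{LTR}_A - \gamma_{m_1}\mathrm{TAR},\\ \tfrac{d}{dt}\mathrm{env}_I &= \alpha_{m_2,I}\mathrm{LTR}_I - (\gamma_{m_2}+\alpha_{p_1}+\alpha_{p_2})\mathrm{env}_I,\\ \tfrac{d}{dt}\mathrm{env}_A &= f_{m_2}(\mathrm{Tat})\,\mathrm{LTR}_A - (\gamma_{m_2}+\alpha_{p_2})\mathrm{env}_A,\\ \tfrac{d}{dt}\mathrm{Pr55} &= \alpha_{p_2}\mathrm{env}_I + \alpha_{p_2}\mathrm{env}_A - (\alpha_{p_3}/w_2)\mathrm{Pr55},\\ \tfrac{d}{dt}\mathrm{p24}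 &= (\alpha_{p_3}/w_2)\mathrm{Pr55} - \gamma_{p_2}\mathrm{p24}, \end{aligned} \] with \[ f_{m_2}(\mathrm{Tat}) = \frac{\alpha_{m_2,A}}{v_a}\,\frac{1+v_a(\mathrm{Tat}/T_c)^n}{1+(\mathrm{Tat}/T_c)^n},\qquad k_A(\mathrm{Tat}) = \frac{\beta_{m_2,A}}{v_b}\,\frac{1+v_b(\mathrm{Tat}/T_c)^m}{1+(\mathrm{Tat}/T_c)^m}, \] where $v_a>1$, $v_b>1$. Then this system is positively invariant, i.e. solutions starting with all components nonnegative remain nonnegative for all $t\ge 0$.
   Context: All parameters ($k_{ON},k_{OFF},k_I,w_1,\dots,w_5,\alpha$'s, $\beta_{m_2,A}$, $\gamma$'s, $T_c=\mathrm{Tat}_{crit}$) are positive constants, and $n,m\ge 1$. The LTR variables represent proportions of a conserved total LTR: $\mathrm{LTR}_R+\mathrm{LTR}_I+\mathrm{LTR}_A=1$. *)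

(* Defs.v *)
From Stdlib Require Import Reals.
From Coquelicot Require Import Coquelicot.
Open Scope R_scope.

(* Real power x^y for a real (Hill) exponent y, with the convention
   0^y = 0 (y >= 1) and, off the model domain (x < 0), the value 0. *)
Definition hpow (x y : R) : R := if Rlt_dec 0 x then Rpower x y else 0.

Definition f_m2 (alpha_m2A va Tc n Tat : R) : R :=
  alpha_m2A / va * ((1 + va * hpow (Tat / Tc) n) / (1 + hpow (Tat / Tc) n)).

Definition k_A (beta_m2A vb Tc m Tat : R) : R :=
  beta_m2A / vb * ((1 + vb * hpow (Tat / Tc) m) / (1 + hpow (Tat / Tc) m)).

(* Main.v *)
Require Import Defs.
From Stdlib Require Import Reals.
From Coquelicot Require Import Coquelicot.
Open Scope R_scope.
From Stdlib Require Import Lra Lia Classical.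

Lemma filter_forall_lt {F : (R -> Prop) -> Prop} {FF : Filter F} (N : nat)
  (P : nat -> R -> Prop) :
  (forall i, (i < N)%nat -> F (P i)) -> F (fun u => forall i, (i < N)%nat -> P i u).
Proof.
  induction N as [|N IH]; intros H.
  - apply filter_imp with (fun _ => True); [intros; lia | apply filter_true].
  - apply filter_imp with (fun u => (forall i, (i < N)%nat -> P i u) /\ P N u).
    + intros u [H1 H2] i Hi. destruct (Nat.eq_dec i N) as [->|Hne]; auto.
      apply H1; lia.
    + apply filter_and; [apply IH; intros; apply H; lia | apply H; lia].
Qed.

Lemma touch (N : nat) (z dz : nat -> R -> R)
  (H0pos : forall i, (i < N)%nat -> 0 < z i 0)
  (Hright : forall i, (i < N)%nat -> at_right 0 (fun u => 0 < z i u))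
  (Hder : forall i u, (i < N)%nat -> 0 < u -> is_derive (z i) u (dz i u))
  (Hpos : forall i u, (i < N)%nat -> 0 < u -> (forall j, (j < N)%nat -> 0 <= z j u) ->
           z i u = 0 -> 0 < dz i u) :
  forall t, 0 <= t -> forall i, (i < N)%nat -> 0 < z i t.
Proof.
  assert (Hc : forall i u, (i < N)%nat -> 0 < u -> continuous (z i) u).
  { intros i u Hi Hu. exact (@ex_derive_continuous R_AbsRing R_NormedModule (z i) u (ex_intro _ _ (Hder i u Hi Hu))). }
  destruct (filter_forall_lt N (fun i u => 0 < z i u) Hright) as [d Hd].
  intros t Ht.
  destruct (Req_dec t 0) as [->|Htn0]; [exact H0pos|].
  assert (Htp : 0 < t) by lra.
  destruct (classic (forall i, (i < N)%nat -> 0 < z i t)) as [HH|HH]; [exact HH|].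
  exfalso.
  set (E := fun s => 0 <= s <= t /\ forall v, 0 <= v <= s -> forall i, (i < N)%nat -> 0 < z i v).
  assert (HE0 : E 0).
  { split; [lra|]. intros v Hv. replace v with 0 by lra. exact H0pos. }
  assert (Hb : bound E) by (exists t; intros s [Hs _]; lra).
  destruct (completeness E Hb (ex_intro _ 0 HE0)) as [tau [Hub Hlub]].
  assert (Htau_t : tau <= t) by (apply Hlub; intros s [Hs _]; lra).
  assert (P1 : forall v, 0 <= v < tau -> forall i, (i < N)%nat -> 0 < z i v).
  { intros v Hv. destruct (classic (exists s, E s /\ v < s)) as [[s [[_ Hs] Hvs]]|Hno].
    - apply Hs; lra.
    - exfalso. assert (tau <= v).
      { apply Hlub. intros s Es. apply Rnot_lt_le. intros Hlt. apply Hno; eauto. }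
      lra. }
  assert (Htau_pos : 0 < tau).
  { set (s := Rmin (d/2) t).
    assert (Hs0 : 0 < s) by (unfold s; apply Rmin_pos; [pose proof (cond_pos d)|]; lra).
    assert (E s).
    { split; [split; [lra| apply Rmin_r]|].
      intros v Hv i Hi. destruct (Req_dec v 0) as [->|Hv0]; [apply H0pos; auto|].
      apply Hd; [| lra | auto].
      change (Rabs (v - 0) < d). rewrite Rminus_0_r, Rabs_pos_eq by lra.
      assert (s <= d/2) by apply Rmin_l. pose proof (cond_pos d). lra. }
    pose proof (Hub s H). lra. }
  assert (P2 : forall i, (i < N)%nat -> 0 <= z i tau).
  { intros i Hi. apply Rnot_lt_le. intros Hneg.
    destruct (Hc i tau Hi Htau_pos (fun y => y < 0) (open_lt 0 _ Hneg)) as [e He].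
    set (v := tau - Rmin (e/2) (tau/2)).
    assert (0 < Rmin (e/2) (tau/2)) by (apply Rmin_pos; pose proof (cond_pos e); lra).
    assert (Rmin (e/2) (tau/2) <= e/2) by apply Rmin_l.
    assert (Rmin (e/2) (tau/2) <= tau/2) by apply Rmin_r.
    assert (z i v < 0).
    { apply He. change (Rabs (v - tau) < e). unfold v.
      rewrite Rabs_left by lra. pose proof (cond_pos e). lra. }
    assert (0 < z i v) by (apply P1; [unfold v; lra | auto]). lra. }
  assert (P3 : exists i, (i < N)%nat /\ z i tau = 0).
  { apply NNPP. intros Hn.
    assert (Hp : forall i, (i < N)%nat -> 0 < z i tau).
    { intros i Hi. destruct (P2 i Hi) as [|Heq]; auto. exfalso; apply Hn; eauto. }
    destruct (Req_dec tau t) as [Heq|Hneq].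
    - apply HH. rewrite <- Heq. exact Hp.
    - assert (Hloc : locally tau (fun u => forall i, (i < N)%nat -> 0 < z i u)).
      { apply filter_forall_lt. intros i Hi. apply (Hc i tau Hi Htau_pos (fun y => 0 < y)).
        apply open_gt. auto. }
      destruct Hloc as [e He].
      set (s := Rmin (tau + e/2) t).
      assert (Hs1 : s <= t) by apply Rmin_r.
      assert (Hs2 : s <= tau + e/2) by apply Rmin_l.
      assert (Hs3 : tau < s) by (unfold s; apply Rmin_glb_lt; pose proof (cond_pos e); lra).
      assert (E s).
      { split; [lra|]. intros v Hv i Hi.
        destruct (Rlt_le_dec v tau).
        - apply P1; auto; lra.
        - apply He; auto. change (Rabs (v - tau) < e). rewrite Rabs_pos_eq by lra.
          pose proof (cond_pos e); lra. }
      pose proof (Hub s H). lra. }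
  destruct P3 as [i [Hi Hz]].
  pose proof (Hpos i tau Hi Htau_pos P2 Hz) as Hdp.
  pose proof (proj1 (is_derive_Reals _ _ _) (Hder i tau Hi Htau_pos)) as Hdl.
  destruct (Hdl (dz i tau) Hdp) as [del Hdel].
  set (h := - Rmin (del/2) (tau/2)).
  assert (0 < Rmin (del/2) (tau/2)) by (apply Rmin_pos; pose proof (cond_pos del); lra).
  assert (Rmin (del/2) (tau/2) <= del/2) by apply Rmin_l.
  assert (Rmin (del/2) (tau/2) <= tau/2) by apply Rmin_r.
  assert (Hh : h <> 0) by (unfold h; lra).
  assert (Hha : Rabs h < del) by (unfold h; rewrite Rabs_left by lra; pose proof (cond_pos del); lra).
  specialize (Hdel h Hh Hha). rewrite Hz, Rminus_0_r in Hdel.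
  assert (Hzp : 0 < z i (tau + h)) by (apply P1; [unfold h; lra | auto]).
  assert (Hq : z i (tau + h) / h < 0).
  { unfold Rdiv. rewrite Rmult_comm. apply Rmult_neg_pos; [apply Rinv_lt_0_compat; unfold h; lra | auto]. }
  apply Rabs_def2 in Hdel. lra.
Qed.

Lemma hill_bounds (b v x p : R) : 0 < b -> 1 < v ->
  0 <= b / v * ((1 + v * hpow x p) / (1 + hpow x p)) <= b.
Proof.
  intros Hb Hv.
  assert (Hh : 0 <= hpow x p).
  { unfold hpow. destruct (Rlt_dec 0 x); [unfold Rpower; left; apply exp_pos | lra]. }
  set (h := hpow x p) in *. clearbody h.
  set (q := (1 + v * h) / (1 + h)).
  assert (Hq : q * (1 + h) = 1 + v * h) by (unfold q; field; lra).
  assert (0 <= q) by (unfold q; apply Rdiv_le_0_compat; nra).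
  assert (q <= v) by nra.
  assert (Hbv : b / v * q = b * (q / v)) by (field; lra).
  rewrite Hbv. split.
  - apply Rmult_le_pos; [lra|]. apply Rdiv_le_0_compat; lra.
  - assert (q / v <= 1). { apply (Rmult_le_reg_r v); [lra|]. unfold Rdiv. rewrite Rmult_assoc, Rinv_l by lra. lra. }
    nra.
Qed.

Theorem mainTheorem3
  (kON kOFF kI w1 w2 w3 w4 w5 : R)
  (a_p1 a_p2 a_p3 a_m1R a_m1I a_m1A a_m2I a_m2A b_m2A : R)
  (g_p1 g_p2 g_m1 g_m2 Tc va vb n m : R)
  (HkON : 0 < kON) (HkOFF : 0 < kOFF) (HkI : 0 < kI)
  (Hw1 : 0 < w1) (Hw2 : 0 < w2) (Hw3 : 0 < w3) (Hw4 : 0 < w4) (Hw5 : 0 < w5)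
  (Hap1 : 0 < a_p1) (Hap2 : 0 < a_p2) (Hap3 : 0 < a_p3)
  (Ham1R : 0 < a_m1R) (Ham1I : 0 < a_m1I) (Ham1A : 0 < a_m1A)
  (Ham2I : 0 < a_m2I) (Ham2A : 0 < a_m2A) (Hbm2A : 0 < b_m2A)
  (Hgp1 : 0 < g_p1) (Hgp2 : 0 < g_p2) (Hgm1 : 0 < g_m1) (Hgm2 : 0 < g_m2)
  (HTc : 0 < Tc) (Hva : 1 < va) (Hvb : 1 < vb) (Hn : 1 <= n) (Hm : 1 <= m)
  (LR LI LA Tat TAR envI envA Pr55 p24 : R -> R)
  (Hcont : forall X : R -> R,
      List.In X (LR :: LI :: LA :: Tat :: TAR :: envI :: envA :: Pr55 :: p24 :: nil) ->
      filterlim X (at_right 0) (locally (X 0)))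
  (HLR : forall t, 0 < t -> is_derive LR t (kOFF * LI t - kON * LR t))
  (HLI : forall t, 0 < t -> is_derive LI t
      (- (w3 * w4 / w5 * k_A b_m2A vb Tc m (Tat t) + kOFF) * LI t
       + w1 * kI * LA t + kON * LR t))
  (HLA : forall t, 0 < t -> is_derive LA t
      (w3 * w4 / w5 * k_A b_m2A vb Tc m (Tat t) * LI t - w1 * kI * LA t))
  (HTat : forall t, 0 < t -> is_derive Tat t (a_p1 * envI t - g_p1 * Tat t))
  (HTAR : forall t, 0 < t -> is_derive TAR t
      (a_m1R * LR t + a_m1I * LI t + a_m1A * LA t - g_m1 * TAR t))
  (HenvI : forall t, 0 < t -> is_derive envI t
      (a_m2I * LI t - (g_m2 + a_p1 + a_p2) * envI t))
  (HenvA : forall t, 0 < t -> is_derive envA t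
      (f_m2 a_m2A va Tc n (Tat t) * LA t - (g_m2 + a_p2) * envA t))
  (HPr55 : forall t, 0 < t -> is_derive Pr55 t
      (a_p2 * envI t + a_p2 * envA t - (a_p3 / w2) * Pr55 t))
  (Hp24 : forall t, 0 < t -> is_derive p24 t ((a_p3 / w2) * Pr55 t - g_p2 * p24 t))
  (H0 : 0 <= LR 0 /\ 0 <= LI 0 /\ 0 <= LA 0 /\ 0 <= Tat 0 /\ 0 <= TAR 0 /\
        0 <= envI 0 /\ 0 <= envA 0 /\ 0 <= Pr55 0 /\ 0 <= p24 0) :
  forall t, 0 <= t ->
    0 <= LR t /\ 0 <= LI t /\ 0 <= LA t /\ 0 <= Tat t /\ 0 <= TAR t /\
    0 <= envI t /\ 0 <= envA t /\ 0 <= Pr55 t /\ 0 <= p24 t.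
Proof.
  intros t Ht.
  set (c := w3 * w4 / w5).
  assert (Hc : 0 < c) by (unfold c; apply Rdiv_lt_0_compat; [apply Rmult_lt_0_compat|]; lra).
  assert (Hp3 : 0 < a_p3 / w2) by (apply Rdiv_lt_0_compat; lra).
  destruct (ex_intro (fun K => K = 1 + kOFF + kON + w1*kI + c*b_m2A + a_p1 + a_m1R + a_m1I
      + a_m1A + a_m2I + a_m2A + 2*a_p2 + a_p3/w2) _ eq_refl) as [K HK].
  assert (Hw1kI : 0 < w1 * kI) by (apply Rmult_lt_0_compat; lra).
  assert (Hcb : 0 < c * b_m2A) by (apply Rmult_lt_0_compat; lra).
  assert (HKp : 0 < K) by lra.
  set (X := fun i => match i with 0%nat => LR | 1%nat => LI | 2%nat => LA | 3%nat => Tat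
     | 4%nat => TAR | 5%nat => envI | 6%nat => envA | 7%nat => Pr55 | _ => p24 end).
  set (dX := fun i u => match i with
     | 0%nat => kOFF * LI u - kON * LR u
     | 1%nat => - (c * k_A b_m2A vb Tc m (Tat u) + kOFF) * LI u + w1 * kI * LA u + kON * LR u
     | 2%nat => c * k_A b_m2A vb Tc m (Tat u) * LI u - w1 * kI * LA u
     | 3%nat => a_p1 * envI u - g_p1 * Tat u
     | 4%nat => a_m1R * LR u + a_m1I * LI u + a_m1A * LA u - g_m1 * TAR u
     | 5%nat => a_m2I * LI u - (g_m2 + a_p1 + a_p2) * envI u
     | 6%nat => f_m2 a_m2A va Tc n (Tat u) * LA u - (g_m2 + a_p2) * envA u
     | 7%nat => a_p2 * envI u + a_p2 * envA u - (a_p3 / w2) * Pr55 u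
     | _ => (a_p3 / w2) * Pr55 u - g_p2 * p24 u end).
  assert (HX0 : forall j, (j < 9)%nat -> 0 <= X j 0).
  { intros j Hj. destruct j as [|[|[|[|[|[|[|[|[|j]]]]]]]]]; simpl; try tauto; lia. }
  assert (HXc : forall j, (j < 9)%nat -> filterlim (X j) (at_right 0) (locally (X j 0))).
  { intros j Hj. apply Hcont.
    destruct j as [|[|[|[|[|[|[|[|[|j]]]]]]]]]; simpl; try tauto; lia. }
  assert (HXd : forall j u, (j < 9)%nat -> 0 < u -> is_derive (X j) u (dX j u)).
  { intros j u Hj Hu. destruct j as [|[|[|[|[|[|[|[|[|j]]]]]]]]]; simpl; auto; lia. }
  assert (Hall : forall i, (i < 9)%nat -> 0 <= X i t).
  { intros i Hi. apply Rnot_lt_le. intros Hneg.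
    pose proof (exp_pos (K * t)) as Hexp.
    set (eps := - X i t / (2 * exp (K * t))).
    assert (Heps : 0 < eps) by (unfold eps; apply Rdiv_lt_0_compat; lra).
    assert (Hz : 0 < X i t + eps * exp (K * t)).
    { apply (touch 9 (fun j u => X j u + eps * exp (K * u))
                     (fun j u => dX j u + K * (eps * exp (K * u)))); auto.
      - intros j Hj. pose proof (HX0 j Hj). rewrite Rmult_0_r, exp_0. lra.
      - intros j Hj.
        assert (Hl : -eps < X j 0) by (pose proof (HX0 j Hj); lra).
        pose proof (HXc j Hj (fun y => -eps < y) (open_gt (-eps) (X j 0) Hl)) as H1.
        assert (H2 : at_right 0 (fun u => 0 < u)).
        { exists (mkposreal 1 Rlt_0_1). intros y _ Hy. exact Hy. }
        apply (filter_imp (fun u => -eps < X j u /\ 0 < u)).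
        + intros u [Hu1 Hu2].
          assert (1 < exp (K * u)) by (rewrite <- exp_0; apply exp_increasing; nra).
          nra.
        + apply filter_and; [exact H1 | exact H2].
      - intros j u Hj Hu. apply (is_derive_plus (X j) (fun u => eps * exp (K * u))).
        + apply HXd; auto.
        + replace (K * (eps * exp (K * u))) with (eps * (K * exp (K * u))) by ring.
          auto_derive; auto; ring.
      - intros j u Hj Hu Hnn Hzero.
        pose proof (exp_pos (K * u)) as Hexpu.
        assert (HE : 0 < eps * exp (K * u)) by (apply Rmult_lt_0_compat; lra).
        set (E := eps * exp (K * u)) in *. clearbody E.
        pose proof (Hnn 0%nat ltac:(lia)) as y0.
        pose proof (Hnn 1%nat ltac:(lia)) as y1.
        pose proof (Hnn 2%nat ltac:(lia)) as y2.
        pose proof (Hnn 3%nat ltac:(lia)) as y3.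
        pose proof (Hnn 4%nat ltac:(lia)) as y4.
        pose proof (Hnn 5%nat ltac:(lia)) as y5.
        pose proof (Hnn 6%nat ltac:(lia)) as y6.
        pose proof (Hnn 7%nat ltac:(lia)) as y7.
        pose proof (Hnn 8%nat ltac:(lia)) as y8.
        simpl in y0, y1, y2, y3, y4, y5, y6, y7, y8.
        pose proof (hill_bounds b_m2A vb (Tat u / Tc) m Hbm2A Hvb) as HkA.
        pose proof (hill_bounds a_m2A va (Tat u / Tc) n Ham2A Hva) as Hf.
        fold (k_A b_m2A vb Tc m (Tat u)) in HkA.
        fold (f_m2 a_m2A va Tc n (Tat u)) in Hf.
        unfold dX, X in *.
        set (kA := k_A b_m2A vb Tc m (Tat u)) in *.
        set (f := f_m2 a_m2A va Tc n (Tat u)) in *.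
        clearbody kA f.
        assert (F1 : 0 <= kOFF * (LI u + E)) by (apply Rmult_le_pos; lra).
        assert (F2 : 0 <= w1 * kI * (LA u + E)) by (apply Rmult_le_pos; lra).
        assert (F3 : 0 <= kON * (LR u + E)) by (apply Rmult_le_pos; lra).
        assert (F4 : 0 <= c * kA * (LI u + E)) by (apply Rmult_le_pos; [apply Rmult_le_pos|]; lra).
        assert (F5 : 0 <= c * (b_m2A - kA) * E) by (apply Rmult_le_pos; [apply Rmult_le_pos|]; lra).
        assert (F6 : 0 <= a_p1 * (envI u + E)) by (apply Rmult_le_pos; lra).
        assert (F7 : 0 <= a_m1R * (LR u + E)) by (apply Rmult_le_pos; lra).
        assert (F8 : 0 <= a_m1I * (LI u + E)) by (apply Rmult_le_pos; lra).
        assert (F9 : 0 <= a_m1A * (LA u + E)) by (apply Rmult_le_pos; lra).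
        assert (F10 : 0 <= a_m2I * (LI u + E)) by (apply Rmult_le_pos; lra).
        assert (F11 : 0 <= f * (LA u + E)) by (apply Rmult_le_pos; lra).
        assert (F12 : 0 <= (a_m2A - f) * E) by (apply Rmult_le_pos; lra).
        assert (F13 : 0 <= a_p2 * (envI u + E)) by (apply Rmult_le_pos; lra).
        assert (F14 : 0 <= a_p2 * (envA u + E)) by (apply Rmult_le_pos; lra).
        assert (F15 : 0 <= a_p3 / w2 * (Pr55 u + E)) by (apply Rmult_le_pos; lra).
        assert (D1 : 0 <= kON * E) by (apply Rmult_le_pos; lra).
        assert (D2 : 0 <= (c * kA + kOFF) * E) by (apply Rmult_le_pos; [pose proof (Rmult_le_pos c kA ltac:(lra) ltac:(lra))|]; lra).
        assert (D3 : 0 <= w1 * kI * E) by (apply Rmult_le_pos; lra).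
        assert (D4 : 0 <= g_p1 * E) by (apply Rmult_le_pos; lra).
        assert (D5 : 0 <= g_m1 * E) by (apply Rmult_le_pos; lra).
        assert (D6 : 0 <= (g_m2 + a_p1 + a_p2) * E) by (apply Rmult_le_pos; lra).
        assert (D7 : 0 <= (g_m2 + a_p2) * E) by (apply Rmult_le_pos; lra).
        assert (D8 : 0 <= a_p3 / w2 * E) by (apply Rmult_le_pos; lra).
        assert (D9 : 0 <= g_p2 * E) by (apply Rmult_le_pos; lra).
        assert (G0 : 0 < (K - kOFF) * E) by (apply Rmult_lt_0_compat; lra).
        assert (G1 : 0 < (K - w1 * kI - kON) * E) by (apply Rmult_lt_0_compat; lra).
        assert (G2 : 0 < (K - c * b_m2A) * E) by (apply Rmult_lt_0_compat; lra).
        assert (G3 : 0 < (K - a_p1) * E) by (apply Rmult_lt_0_compat; lra).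
        assert (G4 : 0 < (K - a_m1R - a_m1I - a_m1A) * E) by (apply Rmult_lt_0_compat; lra).
        assert (G5 : 0 < (K - a_m2I) * E) by (apply Rmult_lt_0_compat; lra).
        assert (G6 : 0 < (K - a_m2A) * E) by (apply Rmult_lt_0_compat; lra).
        assert (G7 : 0 < (K - 2 * a_p2) * E) by (apply Rmult_lt_0_compat; lra).
        assert (G8 : 0 < (K - a_p3 / w2) * E) by (apply Rmult_lt_0_compat; lra).
        clear HK.
        destruct j as [|[|[|[|[|[|[|[|[|j]]]]]]]]]; simpl in Hzero |- *; try lia.
        + replace (LR u) with (-E) by lra. lra.
        + replace (LI u) with (-E) by lra. lra.
        + replace (LA u) with (-E) by lra. lra.
        + replace (Tat u) with (-E) by lra. lra.
        + replace (TAR u) with (-E) by lra. lra.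
        + replace (envI u) with (-E) by lra. lra.
        + replace (envA u) with (-E) by lra. lra.
        + replace (Pr55 u) with (-E) by lra. lra.
        + replace (p24 u) with (-E) by lra. lra. }
    assert (X i t + eps * exp (K * t) = X i t / 2) by (unfold eps; field; lra).
    lra. }
  repeat split; [apply (Hall 0%nat) | apply (Hall 1%nat) | apply (Hall 2%nat)
    | apply (Hall 3%nat) | apply (Hall 4%nat) | apply (Hall 5%nat) | apply (Hall 6%nat)
    | apply (Hall 7%nat) | apply (Hall 8%nat)]; lia.
Qed.
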